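(* Let $R$ be a commutative Bézout ring such that for every $a\in R\setminus J(R)$ the set $Z(a)$ of maximal ideals of $R$ containing $a$ is finite. Then $R$ is strongly completable: for every $n\ge 2$ and all $a_1,\dots,a_n,d\in R$ with $a_1R+\cdots+a_nR=dR$, there is an $n\times n$ matrix over $R$ with first row $(a_1,\dots,a_n)$ and determinant $d$.
   Context: All rings are commutative with identity; $J(R)$ denotes the Jacobson radical. A ring is Bézout if every finitely generated ideal is principal. *)

(* Defs.v *)
From mathcomp Require Import all_boot all_order all_algebra.
Set Implicit Arguments. Unset Strict Implicit. Unset Printing Implicit Defensive.
Import GRing.Theory.
Local Open Scope ring_scope.

Definition is_ideal (R : comPzRingType) (I : R -> Prop) : Prop :=
  [/\ I 0, (forall x y, I x -> I y -> I (x + y)) &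
      (forall r x, I x -> I (r * x))].

Definition is_maximal_ideal (R : comPzRingType) (M : R -> Prop) : Prop :=
  [/\ is_ideal M, ~ M 1 &
      (forall I : R -> Prop, is_ideal I -> (forall x, M x -> I x) ->
         (forall x, I x <-> M x) \/ (forall x, I x))].

Definition jacobson (R : comPzRingType) (x : R) : Prop :=
  forall M : R -> Prop, is_maximal_ideal M -> M x.

Definition finite_Z (R : comPzRingType) (a : R) : Prop :=
  exists (k : nat) (f : nat -> R -> Prop),
    forall M : R -> Prop, is_maximal_ideal M -> M a ->
      exists2 i, (i < k)%N & forall x, M x <-> f i x.

Definition in_gen_ideal (R : comPzRingType) (n : nat) (a : 'I_n -> R) (x : R)
  : Prop := exists c : 'I_n -> R, x = \sum_(i < n) a i * c i.

Definition bezout_ring (R : comPzRingType) : Prop :=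
  forall (n : nat) (a : 'I_n -> R), exists d : R,
    forall x, in_gen_ideal a x <-> exists r, x = d * r.

Definition strongly_completable (R : comPzRingType) : Prop :=
  forall (n : nat) (a : 'I_n.+2 -> R) (d : R),
    (forall x, in_gen_ideal a x <-> exists r, x = d * r) ->
    exists A : 'M[R]_n.+2, (forall j, A ord0 j = a j) /\ \det A = d.

(* Main.v *)
Require Import Defs.
From mathcomp Require Import all_boot all_order all_algebra.
From mathcomp Require Import ring.
From mathcomp Require Import boolp classical_sets.
Set Implicit Arguments. Unset Strict Implicit. Unset Printing Implicit Defensive.
Import GRing.Theory.
Local Open Scope ring_scope.

Lemma idealN (R : comPzRingType) (I : R -> Prop) x : is_ideal I -> I x -> I (- x).
Proof. by case=> _ _ hm Ix; rewrite -mulN1r; apply: hm. Qed.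

Lemma idealMr (R : comPzRingType) (I : R -> Prop) x r : is_ideal I -> I x -> I (x * r).
Proof. by case=> _ _ hm Ix; rewrite mulrC; apply: hm. Qed.

Lemma idealD (R : comPzRingType) (I : R -> Prop) x y : is_ideal I -> I x -> I y -> I (x + y).
Proof. by case=> _ ha _; apply: ha. Qed.

Lemma idealM (R : comPzRingType) (I : R -> Prop) x r : is_ideal I -> I x -> I (r * x).
Proof. by case=> _ _ hm; apply: hm. Qed.

Lemma ideal0 (R : comPzRingType) (I : R -> Prop) : is_ideal I -> I 0.
Proof. by case. Qed.

Lemma krull (R : comPzRingType) (I : R -> Prop) :
  is_ideal I -> ~ I 1 -> exists M, is_maximal_ideal M /\ (forall x, I x -> M x).
Proof.
move=> iI nI1.
pose P := fun X : set R => X = set0 \/ [/\ is_ideal X, ~ X 1 & forall x, I x -> X x].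
have hP : forall F : set (set R), (F `<=` P)%classic -> total_on F subset ->
    P (\bigcup_(X in F) X)%classic.
  move=> F FP Ftot.
  have [[X0 FX0 nX0]|] := pselect (exists2 X, F X & X <> set0); last first.
    move=> hno; left; apply/seteqP; split=> x //= [X FX Xx].
    have : X = set0 by apply: contra_notP hno => h; exists X.
    by move=> eX; move: Xx; rewrite eX.
  have Fid : forall X, F X -> forall x, X x -> [/\ is_ideal X, ~ X 1 & forall x, I x -> X x].
    move=> X FX x Xx; case: (FP X FX) => // eX.
    by move: Xx; rewrite eX.
  have [iX0 nX01 IX0] : [/\ is_ideal X0, ~ X0 1 & forall x, I x -> X0 x].
    by case: (FP X0 FX0).
  right; split.
  - split.
    + by exists X0 => //; apply: ideal0.
    + move=> x y [X FX Xx] [Y FY Yy].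
      have [XY|YX] := Ftot X Y FX FY.
      * exists Y => //; have [iY _ _] := Fid Y FY y Yy.
        by apply: idealD => //; apply: XY.
      * exists X => //; have [iX _ _] := Fid X FX x Xx.
        by apply: idealD => //; apply: YX.
    + move=> r x [X FX Xx]; exists X => //; have [iX _ _] := Fid X FX x Xx.
      exact: idealM.
  - by move=> [X FX X1]; have [_ nX1 _] := Fid X FX 1 X1.
  - by move=> x Ix; exists X0 => //; apply: IX0.
have [A [PA Amax]] := Zorn_bigcup hP.
case: PA => [A0|[iA nA1 IA]].
  exfalso; apply: (Amax I); last by right.
  rewrite A0; split; first by [].
  by move=> h; have := h 0 (ideal0 iI).
exists A; split => //; split => // J iJ AJ.
have [J1|nJ1] := pselect (J 1).
  by right=> x; rewrite -(mulr1 x); apply: idealM.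
have [h|hne] := pselect (forall x, J x <-> A x); first by left.
exfalso; apply: (Amax J).
  split; first by move=> x; apply: AJ.
  move=> JA; apply: hne => x; split; [exact: JA|exact: AJ].
by right; split => // x Ix; apply: AJ; apply: IA.
Qed.

Definition eqI (R : comPzRingType) (M N : R -> Prop) := forall x, M x <-> N x.

Lemma max_prime (R : comPzRingType) (M : R -> Prop) a b :
  is_maximal_ideal M -> M (a * b) -> ~ M a -> M b.
Proof.
move=> [iM nM1 mM] Mab nMa.
pose J := fun x : R => exists m w, M m /\ x = m + a * w.
have iJ : is_ideal J.
  split.
  - by exists 0, 0; split; [exact: ideal0|rewrite mulr0 addr0].
  - move=> x y [m [w [Mm ->]]] [m' [w' [Mm' ->]]]; exists (m + m'), (w + w').
    by split; [exact: idealD|ring].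
  - move=> r x [m [w [Mm ->]]]; exists (r * m), (r * w).
    by split; [exact: idealM|ring].
have MJ : forall x, M x -> J x by move=> x Mx; exists x, 0; rewrite mulr0 addr0.
case: (mM J iJ MJ) => [h|h].
  by exfalso; apply: nMa; apply/h; exists 0, 1; split; [exact: ideal0|rewrite mulr1 add0r].
have [m [w [Mm e]]] := h 1.
have -> : b = b * m + w * (a * b) by rewrite -[b in LHS]mulr1 e; ring.
by apply: idealD => //; [exact: idealM|exact: idealM].
Qed.

Lemma max_distinct (R : comPzRingType) (M1 M0 : R -> Prop) :
  is_maximal_ideal M1 -> is_maximal_ideal M0 -> ~ eqI M1 M0 ->
  exists w, M1 w /\ ~ M0 w.
Proof.
move=> [iM1 nM1 mM1] [iM0 nM0 mM0] ne.
apply: contra_notP ne => hn x.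
have sub : forall w, M1 w -> M0 w.
  by move=> w M1w; apply: contra_notP hn => nw; exists w.
case: (mM1 M0 iM0 sub) => [h|h]; first by split; [apply: sub| move/h].
by exfalso; apply: nM0; apply: h.
Qed.

Lemma comax (R : comPzRingType) (u v : R) :
  (forall M, is_maximal_ideal M -> M u -> M v -> False) ->
  exists p q, u * p + v * q = 1.
Proof.
move=> h; have [//|hn] := pselect (exists p q, u * p + v * q = 1); exfalso.
pose I := fun x : R => exists p q, x = u * p + v * q.
have iI : is_ideal I.
  split.
  - by exists 0, 0; ring.
  - move=> x y [p [q ->]] [p' [q' ->]]; exists (p + p'), (q + q'); ring.
  - move=> r x [p [q ->]]; exists (r * p), (r * q); ring.
have nI1 : ~ I 1 by move=> [p [q e]]; apply: hn; exists p, q.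
have [M [mM IM]] := krull iI nI1.
apply: (h M mM); apply: IM.
  by exists 1, 0; ring.
by exists 0, 1; ring.
Qed.

Lemma jac_unit (R : comPzRingType) (j : R) : jacobson j -> exists w, (1 - j) * w = 1.
Proof.
move=> hj; have [p [q e]] : exists p q, (1 - j) * p + (1 - j) * q = 1.
  apply: comax => M mM Mj _; have [iM nM1 _] := mM.
  by apply: nM1; rewrite -(subrK j 1); apply: idealD => //; apply: hj.
by exists (p + q); rewrite mulrDr.
Qed.

Lemma eqI_trans (R : comPzRingType) (A B C : R -> Prop) : eqI A B -> eqI B C -> eqI A C.
Proof. by move=> h1 h2 x; rewrite h1 h2. Qed.
Lemma eqI_sym (R : comPzRingType) (A B : R -> Prop) : eqI A B -> eqI B A.
Proof. by move=> h1 x; rewrite h1. Qed.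

Lemma zclaim (R : comPzRingType) (y : R) (f : nat -> R -> Prop) k M0 :
  is_maximal_ideal M0 ->
  (forall M, is_maximal_ideal M -> M y -> (exists2 i, (i < k)%N & eqI M (f i)) -> ~ eqI M M0) ->
  exists z, ~ M0 z /\ forall M, is_maximal_ideal M -> M y ->
     (exists2 i, (i < k)%N & eqI M (f i)) -> M z.
Proof.
move=> mM0; elim: k => [|k IH] hk.
  by exists 1; split; [case: mM0|move=> M _ _ [i]].
have [z [nz Hz]] : exists z, ~ M0 z /\ forall M, is_maximal_ideal M -> M y ->
     (exists2 i, (i < k)%N & eqI M (f i)) -> M z.
  apply: IH => M mM My [i lt e]; apply: hk => //; exists i => //; exact: ltnW.
have [[M1 [mM1 [M1y e1]]]|no] := pselect (exists M1, is_maximal_ideal M1 /\ M1 y /\ eqI M1 (f k)).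
  have ne : ~ eqI M1 M0 by apply: hk => //; exists k.
  have [w [M1w nM0w]] := max_distinct mM1 mM0 ne.
  exists (z * w); split.
    by move=> h; apply: nM0w; apply: (max_prime mM0 h nz).
  move=> M mM My [i]; rewrite ltnS leq_eqVlt => /orP[/eqP->|lt] e.
    have iM : is_ideal M by case: mM.
    apply: idealM => //; apply/(eqI_trans e (eqI_sym e1)); exact: M1w.
  have iM : is_ideal M by case: mM.
  by apply: idealMr => //; apply: Hz => //; exists i.
exists z; split => // M mM My [i]; rewrite ltnS leq_eqVlt => /orP[/eqP->|lt] e.
  by exfalso; apply: no; exists M.
by apply: Hz => //; exists i.
Qed.

Lemma rclaim (R : comPzRingType) (x y c : R) (f : nat -> R -> Prop) k :
  (forall M, is_maximal_ideal M -> M y -> M x -> M c -> False) ->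
  exists r, forall M, is_maximal_ideal M -> M y ->
     (exists2 i, (i < k)%N & eqI M (f i)) -> ~ M (x + c * r).
Proof.
move=> hc; elim: k => [|k [r0 IH]]; first by exists 0 => M _ _ [i].
have [[M0 [mM0 [M0y [e0 M0r]]]]|no] := pselect (exists M0, is_maximal_ideal M0 /\ M0 y /\
     eqI M0 (f k) /\ M0 (x + c * r0)); last first.
  exists r0 => M mM My [i]; rewrite ltnS leq_eqVlt => /orP[/eqP->|lt] e.
    by move=> h; apply: no; exists M.
  by apply: IH => //; exists i.
have [z [nz Hz]] : exists z, ~ M0 z /\ forall M, is_maximal_ideal M -> M y ->
     (exists2 i, (i < k)%N & eqI M (f i)) -> M z.
  apply: zclaim => // M mM My ex e; apply: (IH M mM My ex).
  by apply/e.
have iM0 : is_ideal M0 by case: mM0.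
have nc : ~ M0 c.
  move=> M0c; apply: (hc M0 mM0 M0y) => //.
  have -> : x = (x + c * r0) + - (r0 * c) by ring.
  by apply: idealD => //; apply: idealN => //; apply: idealM.
exists (r0 + z) => M mM My [i]; have iM : is_ideal M by case: mM.
rewrite ltnS leq_eqVlt => /orP[/eqP->|lt] e h.
  have e' : eqI M M0 := eqI_trans e (eqI_sym e0).
  have : M0 (c * z).
    have -> : c * z = (x + c * (r0 + z)) + - (x + c * r0) by ring.
    by apply: idealD => //; [apply/e'|apply: idealN].
  by move/(max_prime mM0)/(_ nc).
apply: (IH M mM My); first by exists i.
have -> : x + c * r0 = (x + c * (r0 + z)) + - (c * z) by ring.
apply: idealD => //; apply: idealN => //; apply: idealM => //.
by apply: Hz => //; exists i.
Qed.

Lemma sr_step (R : comPzRingType) (x y c : R) :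
  (forall a : R, ~ jacobson a -> finite_Z a) -> ~ jacobson y ->
  (forall M, is_maximal_ideal M -> M y -> M x -> M c -> False) ->
  exists r p q, (x + c * r) * p + y * q = 1.
Proof.
move=> hfin ny hc; have [k [f Hf]] := hfin y ny.
have [r Hr] := rclaim f k hc.
exists r; apply: comax => M mM Mx My.
have [i lt e] := Hf M mM My.
by apply: (Hr M mM My) => //; exists i.
Qed.

Lemma hermite2 (R : comPzRingType) :
  bezout_ring R -> (forall a : R, ~ jacobson a -> finite_Z a) ->
  forall x y : R, exists h x1 y1 p q, [/\ x = h * x1, y = h * y1 & x1 * p + y1 * q = 1].
Proof.
move=> hb hfin x y.
pose a2 := fun i : 'I_2 => if i == ord0 then x else y.
have [g hg] := hb 2 a2.
have [x' ex] : exists r, x = g * r.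
  apply/hg; exists (fun i : 'I_2 => if i == ord0 then 1 else 0).
  by rewrite !big_ord_recl big_ord0 /a2 /=; ring.
have [y' ey] : exists r, y = g * r.
  apply/hg; exists (fun i : 'I_2 => if i == ord0 then 0 else 1).
  by rewrite !big_ord_recl big_ord0 /a2 /=; ring.
have [c ec] : in_gen_ideal a2 g by apply/hg; exists 1; rewrite mulr1.
move: ec; rewrite !big_ord_recl big_ord0 /a2 /= addr0.
set s := c _; set t := c _ => e0.
pose cc := 1 - x' * s - y' * t.
have gc : g * cc = 0.
  transitivity (g - x * s - y * t); first by rewrite /cc ex ey; ring.
  by rewrite {1}e0; ring.
suff [r1 [r2 [p [q e]]]] : exists r1 r2 p q, (x' + cc * r1) * p + (y' + cc * r2) * q = 1.
  exists g, (x' + cc * r1), (y' + cc * r2), p, q; split => //.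
    by rewrite mulrDr mulrA gc mul0r addr0.
  by rewrite mulrDr mulrA gc mul0r addr0.
have cond : forall M, is_maximal_ideal M -> M y' -> M x' -> M cc -> False.
  move=> M [iM nM1 _] My Mx Mc; apply: nM1.
  have -> : 1 = x' * s + y' * t + cc by rewrite /cc; ring.
  by apply: idealD => //; apply: idealD => //; apply: idealMr.
have [jy|ny] := pselect (jacobson y'); last first.
  have [r [p [q e]]] := sr_step hfin ny cond.
  by exists r, 0, p, q; rewrite mulr0 addr0.
have [jx|nx] := pselect (jacobson x'); last first.
  have [r [p [q e]]] := sr_step (c := cc) hfin nx (fun M mM a b d => cond M mM b a d).
  by exists 0, r, q, p; rewrite mulr0 addr0 addrC.
have jxy : jacobson (x' * s + y' * t).
  move=> M mM; have iM : is_ideal M by case: mM.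
  by apply: idealD => //; apply: idealMr => //; [apply: jx|apply: jy].
have [w ew] := jac_unit jxy.
have cw : cc * w = 1 by rewrite -ew /cc; congr (_ * _); ring.
exists (w * (1 - x')), 0, 1, 0.
by rewrite !mulr0 !addr0 mulr1 mulrA cw mul1r; ring.
Qed.

Lemma hermite_row (R : comPzRingType) :
  (forall x y : R, exists h x1 y1 p q, [/\ x = h * x1, y = h * y1 & x1 * p + y1 * q = 1]) ->
  forall m (a : 'I_m.+1 -> R), exists g (b s : 'I_m.+1 -> R),
    (forall i, a i = g * b i) /\ \sum_i b i * s i = 1.
Proof.
move=> H2; elim=> [|m IH] a.
  exists (a ord0), (fun _ => 1), (fun _ => 1); split.
    by move=> i; rewrite (ord1 i) mulr1.
  by rewrite big_ord1 mulr1.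
have [g' [b' [s' [eb' es']]]] := IH (fun i => a (lift ord0 i)).
have [h [x1 [y1 [p [q [ex ey exy]]]]]] := H2 (a ord0) g'.
exists h, (fun i => if unlift ord0 i is Some j then y1 * b' j else x1),
  (fun i => if unlift ord0 i is Some j then q * s' j else p); split.
  move=> i; case: (unliftP ord0 i) => [j ->|->] //.
  by rewrite eb' ey mulrA.
rewrite big_ord_recl unlift_none.
under eq_bigr => j _ do rewrite liftK mulrACA.
by rewrite -mulr_sumr es' mulr1.
Qed.

Definition Nmx (R : comPzRingType) m (a0 g t s : R) : 'M[R]_m.+2 :=
  \matrix_(i, j) if (i == 0 :> nat) then (if (j == 0 :> nat) then a0 else if (j == 1 :> nat) then g else 0)
    else if (i == 1 :> nat) then (if (j == 0 :> nat) then - t else if (j == 1 :> nat) then s else 0)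
    else (i == j :> nat)%:R.

Lemma det_Nmx (R : comPzRingType) m (a0 g t s : R) : \det (Nmx m a0 g t s) = a0 * s + g * t.
Proof.
rewrite (expand_det_row _ ord0) !big_ord_recl.
rewrite big1; last first.
  by move=> j _; rewrite mxE /= /bump /= mul0r.
rewrite !mxE /= /bump /= /cofactor.
have -> : row' ord0 (col' ord0 (Nmx m a0 g t s)) =
   diag_mx (\row_(j < m.+1) (if (j == 0 :> nat) then s else 1)).
  apply/matrixP=> i j; rewrite !mxE /= /bump /= -val_eqE /=.
  case: i => [[|i] Hi]; case: j => [[|j] Hj] //=; rewrite ?mulr1n ?mulr0n //.
have -> : row' ord0 (col' (lift ord0 ord0) (Nmx m a0 g t s)) =
   diag_mx (\row_(j < m.+1) (if (j == 0 :> nat) then - t else 1)).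
  apply/matrixP=> i j; rewrite !mxE /= /bump /= -val_eqE /=.
  case: i => [[|i] Hi]; case: j => [[|j] Hj] //=; rewrite ?mulr1n ?mulr0n //.
rewrite !det_diag !big_ord_recl !mxE /=.
rewrite !big1 => [||j _]; last by rewrite mxE.
  rewrite expr0 expr1; ring.
by move=> j _; rewrite mxE.
Qed.

Definition Dmx (R : comPzRingType) m (B : 'M[R]_m) : 'M[R]_m.+1 :=
  \matrix_(i, j) match unlift ord0 i, unlift ord0 j with
    | Some i', Some j' => B i' j' | None, None => 1 | _, _ => 0 end.

Lemma det_Dmx (R : comPzRingType) m (B : 'M[R]_m) : \det (Dmx B) = \det B.
Proof.
rewrite (expand_det_row _ ord0) big_ord_recl big1 => [|j _]; last first.
  by rewrite mxE unlift_none liftK mul0r.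
rewrite mxE unlift_none /cofactor addr0 mul1r /= expr0 mul1r.
congr (\det _); apply/matrixP=> i j; rewrite !mxE !liftK //.
Qed.

Lemma Sgen (R : comPzRingType) :
  (forall m (a : 'I_m.+1 -> R), exists g (b s : 'I_m.+1 -> R),
    (forall i, a i = g * b i) /\ \sum_i b i * s i = 1) ->
  forall m (a c : 'I_m.+2 -> R), exists A : 'M[R]_m.+2,
    (forall j, A ord0 j = a j) /\ \det A = \sum_i a i * c i.
Proof.
move=> HR; elim=> [|m IH] a c.
  exists (Nmx 0 (a ord0) (a (lift ord0 ord0)) (c (lift ord0 ord0)) (c ord0)); split.
    move=> j; rewrite mxE; case: j => [[|[|j]] Hj] //=; congr a; exact: val_inj.
  by rewrite det_Nmx !big_ord_recl big_ord0 addr0.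
have [g [b [s [eb es]]]] := HR m.+1 (fun i => a (lift ord0 i)).
have [B [rB dB]] := IH b s.
pose t := \sum_j b j * c (lift ord0 j).
exists (Nmx m.+1 (a ord0) g t (c ord0) *m Dmx B); split.
  move=> j; rewrite mxE !big_ord_recl big1 => [|k _]; last first.
    by rewrite mxE /= /bump /= mul0r.
  rewrite !mxE /= unlift_none liftK.
  case: (unliftP ord0 j) => [j' ->|->].
    by rewrite rB eb; ring.
  by rewrite addr0; ring.
rewrite det_mulmx det_Nmx det_Dmx dB es mulr1 big_ord_recl; congr (_ + _).
rewrite /t mulr_sumr; apply: eq_bigr => j _; rewrite eb; ring.
Qed.

Theorem proposition4p7 (R : comPzRingType) :
  bezout_ring R ->
  (forall a : R, ~ jacobson a -> finite_Z a) ->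
  strongly_completable R.
Proof.
move=> hb hfin n a d hd.
have HR := hermite_row (hermite2 hb hfin).
have [c ec] : in_gen_ideal a d by apply/hd; exists 1; rewrite mulr1.
have [A [rA dA]] := @Sgen R HR n a c.
by exists A; split => //; rewrite dA ec.
Qed.
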